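(* Let $\rho_1, \sigma_1$ be density operators on $\mathbb{C}^{d_1}$ and $\rho_2, \sigma_2$ density operators on $\mathbb{C}^{d_2}$. If either $D_{\min}(\rho_1\|\sigma_1)\ge D_{\max}(\rho_2\|\sigma_2)$ or $D_{\min}(\sigma_1\|\rho_1)\ge D_{\max}(\sigma_2\|\rho_2)$, then there exists a test-and-prepare channel $\mathcal{E}$ such that $\mathcal{E}(\rho_1)=\rho_2$ and $\mathcal{E}(\sigma_1)=\sigma_2$.
   Context: Logarithms are base 2. For density operators $\rho,\sigma$: $D_{\min}(\rho\|\sigma) := -\log \mathrm{tr}(\sigma \Pi_\rho)$, where $\Pi_\rho$ is the projector onto the support of $\rho$; $D_{\max}(\rho\|\sigma) := \inf\{\lambda\in\mathbb{R} : \rho \le 2^{\lambda}\sigma\}$ in the Löwner order (with $\inf\emptyset=+\infty$). A test-and-prepare channel is a map of the form $\mathcal{E}(X)=\gamma_1\,\mathrm{tr}(EX)+\gamma_2\,\mathrm{tr}((\mathds{1}-E)X)$ where $\gamma_1,\gamma_2$ are density operators and $0\le E\le \mathds{1}$. *)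

(* Defs.v *)
From HB Require Import structures.
From mathcomp Require Import all_boot all_order all_algebra.
From mathcomp Require Import complex.
From mathcomp Require Import all_classical all_reals.
From mathcomp Require Import ereal exp.
Set Implicit Arguments. Unset Strict Implicit. Unset Printing Implicit Defensive.
Import Order.TTheory GRing.Theory Num.Theory.
Local Open Scope ring_scope.
Local Open Scope complex_scope.

Section QDefs.
Variable R : realType.
Local Notation C := R[i].

Definition adj {m n : nat} (A : 'M[C]_(m, n)) : 'M[C]_(n, m) :=
  map_mx (@conjc R) A^T.

(* positive semidefinite: <v, A v> is real and >= 0 for every vector v
   (the order on R[i] is: 0 <= z iff z is real and nonnegative) *)
Definition psd {n : nat} (A : 'M[C]_n) : Prop :=
  forall v : 'cV[C]_n, 0 <= (adj v *m A *m v) 0 0.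

Definition lowner {n : nat} (A B : 'M[C]_n) : Prop := psd (B - A).

Definition density {n : nat} (rho : 'M[C]_n) : Prop :=
  psd rho /\ \tr rho = 1.

(* P is the orthogonal projector onto the support (range) of rho:
   P hermitian, idempotent, and with the same range as rho
   (for hermitian matrices row space and range agree up to conjugation,
   so equality of row spaces expresses equality of ranges) *)
Definition is_supp_proj {n : nat} (rho P : 'M[C]_n) : Prop :=
  adj P = P /\ P *m P = P /\ (P == rho)%MS.

Definition supp_proj {n : nat} (rho : 'M[C]_n) : 'M[C]_n :=
  xget 0 [set P | is_supp_proj rho P].

Definition log2 (x : R) : R := ln x / ln 2.

Definition Dmin {n : nat} (rho sigma : 'M[C]_n) : \bar R :=
  let t := complex.Re (\tr (sigma *m supp_proj rho)) in
  if t == 0 then +oo%E else (- log2 t)%:E.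

Definition Dmax {n : nat} (rho sigma : 'M[C]_n) : \bar R :=
  ereal_inf [set (lam%:E) | lam in [set lam : R | lowner rho (((2 : R) `^ lam)%:C *: sigma)]].

Definition test_prepare {d1 d2 : nat} (g1 g2 : 'M[C]_d2) (E : 'M[C]_d1)
  (X : 'M[C]_d1) : 'M[C]_d2 :=
  \tr (E *m X) *: g1 + \tr ((1%:M - E) *m X) *: g2.

Definition is_test_prepare {d1 d2 : nat} (Ch : 'M[C]_d1 -> 'M[C]_d2) : Prop :=
  exists (g1 g2 : 'M[C]_d2) (E : 'M[C]_d1),
    density g1 /\ density g2 /\ psd E /\ lowner E 1%:M /\
    Ch = test_prepare g1 g2 E.

End QDefs.

(* Main.v *)
Require Import Defs.
From HB Require Import structures.
From mathcomp Require Import all_boot all_order all_algebra.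
From mathcomp Require Import complex.
From mathcomp Require Import all_classical all_reals.
From mathcomp Require Import ereal exp.
From mathcomp Require Import sesquilinear spectral.
From mathcomp Require Import ring lra.
Import Order.TTheory GRing.Theory Num.Theory.
Local Open Scope ring_scope.

Set Implicit Arguments.
Unset Strict Implicit.
Section Helpers.
Variable R : realType.
Local Notation C := R[i].

Lemma conjcE (x : C) : Num.conj x = conjc x. Proof. by []. Qed.

Lemma adjM m n p (A : 'M[C]_(m,n)) (B : 'M[C]_(n,p)) :
  adj (A *m B) = adj B *m adj A.
Proof. by rewrite /adj trmx_mul map_mxM. Qed.

Lemma adjK m n (A : 'M[C]_(m,n)) : adj (adj A) = A.
Proof. by apply/matrixP => i j; rewrite !mxE conjcK. Qed.

Lemma adjD m n (A B : 'M[C]_(m,n)) : adj (A + B) = adj A + adj B.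
Proof. by apply/matrixP => i j; rewrite !mxE rmorphD. Qed.

Lemma adjN m n (A : 'M[C]_(m,n)) : adj (- A) = - adj A.
Proof. by apply/matrixP => i j; rewrite !mxE rmorphN. Qed.

Lemma adj1 n : adj (1%:M : 'M[C]_n) = 1%:M.
Proof. by apply/matrixP => i j; rewrite !mxE eq_sym; case: eqP => _; rewrite ?conjc1 ?conjc0. Qed.

Lemma adjZ m n (c : C) (A : 'M[C]_(m,n)) : adj (c *: A) = conjc c *: adj A.
Proof. by apply/matrixP => i j; rewrite !mxE rmorphM. Qed.

Lemma form_ge0 n (w : 'cV[C]_n) : 0 <= (adj w *m w) 0 0.
Proof.
rewrite !mxE; apply: sumr_ge0 => i _; rewrite !mxE mulrC.
exact: (mul_conjC_ge0 (w i 0)).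
Qed.

Lemma psd_gram k n (M : 'M[C]_(k,n)) : psd (adj M *m M).
Proof.
move=> v.
have -> : adj v *m (adj M *m M) *m v = adj (M *m v) *m (M *m v).
  by rewrite adjM !mulmxA.
exact: form_ge0.
Qed.

Lemma psd_conj n k (A : 'M[C]_n) (M : 'M[C]_(n,k)) : psd A -> psd (adj M *m A *m M).
Proof.
move=> hA v.
have -> : adj v *m (adj M *m A *m M) *m v = adj (M *m v) *m A *m (M *m v).
  by rewrite adjM !mulmxA.
exact: hA.
Qed.

Lemma adj_delta n (k : 'I_n) : adj (delta_mx k 0 : 'cV[C]_n) = delta_mx 0 k.
Proof.
apply/matrixP => i j; rewrite !mxE.
by rewrite andbC conjc_nat.
Qed.

Lemma form_delta n (X : 'M[C]_n) (k l : 'I_n) :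
  (adj (delta_mx k 0 : 'cV[C]_n) *m X *m (delta_mx l 0 : 'cV[C]_n)) 0 0 = X k l.
Proof. by rewrite adj_delta -rowE -colE !mxE. Qed.

Lemma psd_tr n (X : 'M[C]_n) : psd X -> 0 <= \tr X.
Proof.
move=> hX; rewrite /mxtrace; apply: sumr_ge0 => i _.
by rewrite -form_delta; apply: hX.
Qed.


Lemma supp_exists n (rho : 'M[C]_n) : exists P, is_supp_proj rho P.
Proof.
pose U := schmidt (row_base rho).
have hU : U *m adj U = 1%:M.
  by apply/unitarymxP; apply: schmidt_unitarymx; apply: rank_leq_col.
exists (adj U *m U); split; [|split].
- by rewrite adjM adjK.
- by rewrite mulmxA -(mulmxA (adj U)) hU mulmx1.
have h1 : (adj U *m U <= U)%MS by apply: submxMl.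
have h2 : (U <= adj U *m U)%MS.
  by rewrite -{1}[U]mul1mx -hU -mulmxA submxMl.
have e : (U :=: rho)%MS.
  exact: eqmx_trans (eqmx_schmidt_free (row_base_free _)) (eq_row_base _).
apply/andP; split; [apply: submx_trans h1 _ | apply: submx_trans _ h2]; by rewrite e.
Qed.

Lemma supp_spec n (rho : 'M[C]_n) : is_supp_proj rho (supp_proj rho).
Proof.
rewrite /supp_proj; have [P hP] := supp_exists rho.
by apply: (@xgetPex _ 0 [set P | is_supp_proj rho P]); exists P.
Qed.


Definition hproj n (P : 'M[C]_n) := adj P = P /\ P *m P = P.

Lemma hproj_compl n (P : 'M[C]_n) : hproj P -> hproj (1%:M - P).
Proof.
case=> hA hI; split; first by rewrite adjD adjN adj1 hA.
by rewrite mulmxBl mul1mx mulmxBr mulmx1 hI subrr subr0.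
Qed.

Lemma hproj_psd n (P : 'M[C]_n) : hproj P -> psd P.
Proof. by case=> hA hI; rewrite -{1}hI -{1}hA; apply: psd_gram. Qed.

Lemma hproj_tr n (P A : 'M[C]_n) : hproj P -> psd A -> 0 <= \tr (P *m A).
Proof.
case=> hA hI hpsd.
have -> : \tr (P *m A) = \tr (adj P *m A *m P).
  by rewrite hA [RHS]mxtrace_mulC mulmxA hI.
by apply: psd_tr; apply: psd_conj.
Qed.

Lemma supp_facts n (rho sigma : 'M[C]_n) : density rho -> density sigma ->
  let Q := supp_proj rho in
  [/\ hproj Q, \tr (Q *m rho) = 1, \tr ((1%:M - Q) *m rho) = 0,
      0 <= \tr (Q *m sigma)
    & 0 <= \tr ((1%:M - Q) *m sigma) /\ \tr ((1%:M - Q) *m sigma) = 1 - \tr (Q *m sigma)].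
Proof.
case=> _ tr_rho [psd_s tr_s] Q.
have [hA [hI hS]] := supp_spec rho.
have hQ : hproj Q by [].
have hrQ : rho *m Q = rho.
  have /andP[_ /submxP[D ->]] := hS.
  by rewrite -mulmxA hI.
have t1 : \tr (Q *m rho) = 1 by rewrite mxtrace_mulC hrQ.
have tB : forall X, \tr ((1%:M - Q) *m X) = \tr X - \tr (Q *m X).
  by move=> X; rewrite mulmxBl mul1mx raddfB.
split => //.
- by rewrite tB t1 tr_rho subrr.
- exact: hproj_tr.
- split; first exact: hproj_tr (hproj_compl hQ) psd_s.
  by rewrite tB tr_s.
Qed.


Lemma entryD (X Y : 'M[C]_1) : (X + Y) 0 0 = X 0 0 + Y 0 0.
Proof. by rewrite mxE. Qed.
Lemma entryZ c (X : 'M[C]_1) : (c *: X) 0 0 = c * X 0 0.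
Proof. by rewrite mxE. Qed.

Lemma form_pair n (S : 'M[C]_n) (i j : 'I_n) (c : C) :
  let v := (delta_mx i 0 + c *: delta_mx j 0 : 'cV[C]_n) in
  (adj v *m S *m v) 0 0
  = S i i + c * S i j + conjc c * S j i + conjc c * c * S j j.
Proof.
move=> v; rewrite /v adjD adjZ !mulmxDl !mulmxDr -!scalemxAl -!scalemxAr.
rewrite !entryD !entryZ !form_delta.
by rewrite mulrA !addrA; congr (_ + _); rewrite -!addrA; congr (_ + _); rewrite addrC.
Qed.

Lemma conjci : conjc ('i : C) = - 'i.
Proof. rewrite -conjcE; exact: conjCi. Qed.
Lemma conjcNi : conjc (- 'i : C) = 'i.
Proof. rewrite -conjcE rmorphN /=; have -> : Num.conj ('i : C) = - 'i by exact: conjCi. by rewrite opprK. Qed.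

Lemma psd_tr0 n (S : 'M[C]_n) : psd S -> \tr S = 0 -> S = 0.
Proof.
move=> hS tr0.
have ge i : 0 <= S i i by rewrite -form_delta; apply: hS.
have diag i : S i i = 0.
  move: tr0; rewrite /mxtrace => /eqP; rewrite psumr_eq0; last by move=> k _; apply: ge.
  by move=> /allP /(_ i (mem_index_enum _)) /implyP /(_ isT) /eqP.
apply/matrixP => i j; rewrite mxE.
have f c : 0 <= c * S i j + conjc c * S j i.
  have := hS (delta_mx i 0 + c *: delta_mx j 0).
  by rewrite form_pair !diag mulr0 addr0 add0r.
have e1 : S i j + S j i = 0.
  apply/le_anti/andP; split; last by have := f 1; rewrite rmorph1 !mul1r.
  by rewrite -oppr_ge0; have := f (-1); rewrite rmorphN rmorph1 !mulN1r opprD.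
have e2 : S i j - S j i = 0.
  have : 'i * (S i j - S j i) = 0.
    apply/le_anti/andP; split.
      rewrite -oppr_ge0; have h := f (- 'i); rewrite conjcNi in h.
      by apply: le_trans h _; rewrite le_eqVlt; apply/orP; left; apply/eqP; ring.
    have h := f 'i; rewrite conjci in h.
    by apply: le_trans h _; rewrite le_eqVlt; apply/orP; left; apply/eqP; ring.
  by move/eqP; rewrite mulf_eq0 (negPf (neq0Ci _)) /= => /eqP.
move/eqP: e2; rewrite subr_eq0 => /eqP e2.
by move: e1; rewrite e2 => /eqP; rewrite -mulr2n mulrn_eq0 /= => /eqP.
Qed.


Lemma pow2log2 (x : R) : 0 < x -> (2 : R) `^ (log2 x) = x.
Proof.
move=> hx; have hl2 : ln (2 : R) != 0 by rewrite gt_eqF // ln_gt0 // ltr1n.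
apply: ln_inj; rewrite ?posrE ?powR_gt0 //.
by rewrite ln_powR /log2 divfK.
Qed.

Lemma log2_gt0 (x : R) : 1 < x -> 0 < log2 x.
Proof. by move=> hx; rewrite /log2 divr_gt0 // ln_gt0 // ltr1n. Qed.

Lemma ge0_real (z : C) : 0 <= z -> z = ((complex.Re z)%:C)%C /\ 0 <= complex.Re z.
Proof.
case: z => a b; rewrite lecE /= => /andP[/eqP hb ha]; split => //.
by rewrite hb.
Qed.


Lemma entryB (X Y : 'M[C]_1) : (X - Y) 0 0 = X 0 0 - Y 0 0.
Proof. by rewrite !mxE. Qed.

Lemma form_lin n (A B : 'M[C]_n) (c : C) (v : 'cV[C]_n) :
  (adj v *m (c *: A - B) *m v) 0 0 = c * (adj v *m A *m v) 0 0 - (adj v *m B *m v) 0 0.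
Proof. by rewrite mulmxBr mulmxBl entryB -scalemxAr -scalemxAl entryZ. Qed.

Lemma form_lin2 n (A B : 'M[C]_n) (c : C) (v : 'cV[C]_n) :
  (adj v *m (A - c *: B) *m v) 0 0 = (adj v *m A *m v) 0 0 - c * (adj v *m B *m v) 0 0.
Proof. by rewrite mulmxBr mulmxBl entryB -scalemxAr -scalemxAl entryZ. Qed.

Lemma Dmax_psd n (rho sigma : 'M[C]_n) (t : R) : 0 < t -> psd rho -> psd sigma ->
  (Dmax rho sigma <= (- log2 t)%:E)%E -> psd (sigma - (t%:C)%C *: rho).
Proof.
move=> t0 hr hs H v.
have [eA a0] := ge0_real (hs v).
have [eB b0] := ge0_real (hr v).
move: eA a0 eB b0; set a := complex.Re _; set b := complex.Re _ => eA a0 eB b0.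
have key : t * b <= a.
  apply/ler_addgt0Pr => e e0.
  pose dl := e / (a + 1).
  have a10 : 0 < a + 1 by rewrite ltr_wpDl.
  have dl0 : 0 < dl by rewrite divr_gt0.
  have ea : dl * a <= e.
    rewrite /dl mulrAC ler_pdivrMr // ler_wpM2l ?ltW //.
    by rewrite ltrDl.
  pose eps := log2 (1 + dl).
  have eps0 : 0 < eps by apply: log2_gt0; rewrite ltrDl.
  have : (Dmax rho sigma < (- log2 t + eps)%:E)%E.
    by apply: le_lt_trans H _; rewrite lte_fin ltrDl.
  case/ereal_inf_lt => _ [lam hlam <-]; rewrite lte_fin => hlt.
  have hb2 : b <= 2 `^ lam * a.
    have := hlam v; rewrite form_lin eA eB -rmorphM -rmorphB.
    by rewrite lecE /= eqxx /= subr_ge0.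
  have hdl1 : 0 < 1 + dl by rewrite addr_gt0.
  have hp : 2 `^ lam <= (1 + dl) / t.
    have -> : (1 + dl) / t = 2 `^ (- log2 t + eps).
      have -> : - log2 t + eps = log2 ((1 + dl) / t).
        rewrite /eps /log2 ln_div ?posrE //.
        by rewrite mulrBl addrC.
      by rewrite pow2log2 // divr_gt0.
    by apply: ler_powR; [rewrite ler1n | exact: ltW].
  apply: (le_trans (ler_wpM2l (ltW t0) hb2)).
  rewrite mulrA.
  have h1 : t * 2 `^ lam <= 1 + dl.
    by apply: le_trans (ler_wpM2l (ltW t0) hp) _; rewrite mulrC divfK ?gt_eqF.
  apply: le_trans (ler_wpM2r a0 h1) _.
  by rewrite mulrDl mul1r lerD2l.
rewrite form_lin2 eA eB -rmorphM -rmorphB.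
by rewrite lecE /= eqxx /= subr_ge0.
Qed.


Lemma psd_scale n (A : 'M[C]_n) (c : C) : 0 <= c -> psd A -> psd (c *: A).
Proof.
move=> c0 hA v; rewrite -scalemxAr -scalemxAl entryZ.
by apply: mulr_ge0 => //; apply: hA.
Qed.

Lemma main_case d1 d2 (rho1 sigma1 : 'M[C]_d1) (rho2 sigma2 : 'M[C]_d2) :
  density rho1 -> density sigma1 -> density rho2 -> density sigma2 ->
  (Dmax rho2 sigma2 <= Dmin rho1 sigma1)%E ->
  exists g1 g2 E, [/\ density g1, density g2, psd E, lowner E 1%:M &
     test_prepare g1 g2 E rho1 = rho2 /\ test_prepare g1 g2 E sigma1 = sigma2].
Proof.
move=> dr1 ds1 dr2 ds2 H.
have [hQ t1 t0 Tge0 [Tcge0 TcE]] := supp_facts dr1 ds1.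
move: hQ t1 t0 Tge0 Tcge0 TcE H; rewrite /Dmin (mxtrace_mulC sigma1).
set Q := supp_proj rho1; set T := \tr (Q *m sigma1) => hQ t1 t0 Tge0 Tcge0 TcE H.
have [TE tge0] := ge0_real Tge0.
move: TE tge0 H; set t := complex.Re T => TE tge0 H.
have one_C : (1 : C) = ((1 : R)%:C)%C by [].
have tle1 : t <= 1.
  move: Tcge0; rewrite TcE TE one_C -rmorphB.
  by rewrite lecE /= eqxx /= subr_ge0.
have ev1 g1 g2 : test_prepare g1 g2 Q rho1 = g1.
  by rewrite /test_prepare t1 t0 scale1r scale0r addr0.
have ev2 g1 g2 : test_prepare g1 g2 Q sigma1 = T *: g1 + (1 - T) *: g2.
  by rewrite /test_prepare -/T TcE.
have pQ : psd Q by apply: hproj_psd.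
have lQ : lowner Q 1%:M by apply: hproj_psd; apply: hproj_compl.
case: (eqVneq t 0) => [t_eq0 | t_neq0].
  exists rho2, sigma2, Q; split => //; split; first exact: ev1.
  by rewrite ev2 TE t_eq0 rmorph0 scale0r add0r subr0 scale1r.
rewrite (negPf t_neq0) in H.
have tpos : 0 < t by rewrite lt_def t_neq0.
have hS := Dmax_psd tpos dr2.1 ds2.1 H.
case: (eqVneq t 1) => [t_eq1 | t_neq1].
  have e : sigma2 = rho2.
    apply/eqP; rewrite -subr_eq0; apply/eqP.
    move: hS; rewrite t_eq1 rmorph1 scale1r => hS.
    apply: psd_tr0 => //.
    by rewrite raddfB /= ds2.2 dr2.2 subrr.
  exists rho2, rho2, Q; split => //; split; first exact: ev1.
  by rewrite ev2 TE t_eq1 rmorph1 subrr scale0r addr0 scale1r e.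
have tlt1 : t < 1 by rewrite lt_neqAle t_neq1.
have t1C : 1 - T = ((1 - t)%:C)%C by rewrite TE one_C rmorphB.
have ne1 : 1 - t != 0 by rewrite subr_eq0 eq_sym.
exists rho2, (((1 - t)^-1)%:C%C *: (sigma2 - (t%:C)%C *: rho2)), Q; split => //.
- split.
    apply: psd_scale => //.
    by rewrite lecE /= eqxx /= invr_ge0 subr_ge0.
  rewrite mxtraceZ raddfB /= mxtraceZ ds2.2 dr2.2 mulr1 one_C -rmorphB -rmorphM.
  by rewrite mulVf.
split; first exact: ev1.
rewrite ev2 t1C scalerA -rmorphM mulfV // rmorph1 scale1r TE.
by rewrite addrC subrK.
Qed.

End Helpers.

Unset Implicit Arguments.

Theorem corollary1 (R : realType) (d1 d2 : nat)
  (rho1 sigma1 : 'M[R[i]]_d1) (rho2 sigma2 : 'M[R[i]]_d2) :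
  density rho1 -> density sigma1 -> density rho2 -> density sigma2 ->
  ((Dmax rho2 sigma2 <= Dmin rho1 sigma1)%E \/
   (Dmax sigma2 rho2 <= Dmin sigma1 rho1)%E) ->
  exists Ch : 'M[R[i]]_d1 -> 'M[R[i]]_d2,
    is_test_prepare Ch /\ Ch rho1 = rho2 /\ Ch sigma1 = sigma2.
Proof.
move=> dr1 ds1 dr2 ds2 [H|H].
  have [g1 [g2 [E [h1 h2 h3 h4 [e1 e2]]]]] := main_case dr1 ds1 dr2 ds2 H.
  exists (test_prepare g1 g2 E); split => //.
  by exists g1, g2, E.
have [g1 [g2 [E [h1 h2 h3 h4 [e1 e2]]]]] := main_case ds1 dr1 ds2 dr2 H.
exists (test_prepare g1 g2 E); split => //.
by exists g1, g2, E.
Qed.
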